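(* Let $\mathsf V=(\mathsf V,\otimes,k)$ be a quantale in which $k=\top$ is the top element, and assume there is a sequence $(u_n)_{n\in\mathbb N}$ in $\mathsf V$ such that $\bigvee_{n\in\mathbb N}u_n=k$, $u_n\ll k$ for all $n$, and $u_n\le u_{n+1}$ for all $n$. Let $X=(X,a)$ be a $\mathsf V$-category. Then for every adjunction $\varphi\dashv\psi$ with $\varphi:E\rightharpoonup X$ and $\psi:X\rightharpoonup E$ there is a Cauchy sequence $s$ in $X$ with $\varphi=\varphi_s$ and $\psi=\psi_s$. Consequently, $X$ is Cauchy complete if and only if every Cauchy sequence in $X$ converges.
   Context: A quantale $\mathsf V=(\mathsf V,\otimes,k)$ is a complete anti-symmetric lattice with an associative, commutative binary operation $\otimes$ with neutral element $k$ such that $u\otimes\bigvee_{i}v_i=\bigvee_i(u\otimes v_i)$ for all families; $\hom(u,-)$ denotes the right adjoint of $u\otimes-$. For $u,x\in\mathsf V$, $u\ll x$ ($u$ is totally below $x$) means: for every $S\subseteq\mathsf V$ with $x\le\bigvee S$ there is $s\in S$ with $u\le s$. A $\mathsf V$-category $X=(X,a)$ is a set with $a:X\times X\to\mathsf V$ such that $k\le a(x,x)$ and $a(x,y)\otimes a(y,z)\le a(x,z)$. A $\mathsf V$-module $\varphi:(X,a)\rightharpoonup(Y,b)$ is a map $\varphi:X\times Y\to\mathsf V$ with $a(x,x')\otimes\varphi(x',y)\le\varphi(x,y)$ and $\varphi(x,y)\otimes b(y,y')\le\varphi(x,y')$; composition is $(\psi\cdot\varphi)(x,z)=\bigvee_{y}\varphi(x,y)\otimes\psi(y,z)$,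 modules are ordered pointwise, and $\varphi\dashv\psi$ (for $\psi:Y\rightharpoonup X$) means $a\le\psi\cdot\varphi$ and $\varphi\cdot\psi\le b$. $E=(\{\star\},k)$ is the one-point $\mathsf V$-category with $k(\star,\star)=k$; modules $E\rightharpoonup X$ and $X\rightharpoonup E$ are identified with maps $X\to\mathsf V$. For $x\in X$, $x_*:E\rightharpoonup X$ is $y\mapsto a(x,y)$ and $x^*:X\rightharpoonup E$ is $y\mapsto a(y,x)$. $X$ is Cauchy complete if every left adjoint module $\varphi:E\rightharpoonup X$ is of the form $x_*$ for some $x\in X$. For a sequence $s=(x_n)$ in $X$, $\mathrm{Cauchy}(s)=\bigvee_{N}\bigwedge_{n,m\ge N}a(x_n,x_m)$, and $s$ is Cauchy if $k\le\mathrm{Cauchy}(s)$; $\varphi_s(x)=\bigvee_N\bigwedge_{n\ge N}a(x_n,x)$ and $\psi_s(x)=\bigvee_N\bigwedge_{n\ge N}a(x,x_n)$. For $M\subseteq X$, the closure is $\overline M=\{x\in X\mid k\le\bigvee_{y\in M}a(x,y)\otimes a(y,x)\}$; a sequence $s$ converges to $x$ if $x\in\overline{\{x_n\mid n\in M\}}$ for every infinite $M\subseteq\mathbb N$. *)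

(* Defs.v *)
From Stdlib Require Import Arith.

Record quantale := Quantale {
  carrier :> Type;
  qle : carrier -> carrier -> Prop;
  qsup : (carrier -> Prop) -> carrier;
  tens : carrier -> carrier -> carrier;
  qunit : carrier;
  qle_refl : forall x, qle x x;
  qle_trans : forall x y z, qle x y -> qle y z -> qle x z;
  qle_antisym : forall x y, qle x y -> qle y x -> x = y;
  qsup_ub : forall (S : carrier -> Prop) x, S x -> qle x (qsup S);
  qsup_least : forall (S : carrier -> Prop) y,
      (forall x, S x -> qle x y) -> qle (qsup S) y;
  tens_assoc : forall x y z, tens x (tens y z) = tens (tens x y) z;
  tens_comm : forall x y, tens x y = tens y x;
  tens_unit : forall x, tens qunit x = x;
  tens_sup : forall u (S : carrier -> Prop),
      tens u (qsup S) = qsup (fun w => exists v, S v /\ w = tens u v)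
}.

Arguments qle {V} : rename.
Arguments qsup {V} : rename.
Arguments tens {V} : rename.
Arguments qunit {V} : rename.

Section Defs.
Variable V : quantale.

Definition qinf (S : V -> Prop) : V := qsup (fun y => forall x, S x -> qle y x).

Definition isup {I : Type} (f : I -> V) : V := qsup (fun w => exists i, w = f i).
Definition iinf {I : Type} (f : I -> V) : V := qinf (fun w => exists i, w = f i).

Definition totally_below (u x : V) : Prop :=
  forall S : V -> Prop, qle x (qsup S) -> exists s, S s /\ qle u s.

Variable X : Type.
Variable a : X -> X -> V.

Definition is_Vcat : Prop :=
  (forall x, qle qunit (a x x)) /\
  (forall x y z, qle (tens (a x y) (a y z)) (a x z)).

(** Modules E -|-> X and X -|-> E, identified with maps X -> V. *)
Definition module_EX (phi : X -> V) : Prop :=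
  (forall y, qle (tens qunit (phi y)) (phi y)) /\
  (forall y y', qle (tens (phi y) (a y y')) (phi y')).

Definition module_XE (psi : X -> V) : Prop :=
  (forall x x', qle (tens (a x x') (psi x')) (psi x)) /\
  (forall x, qle (tens (psi x) qunit) (psi x)).

(** phi -| psi:  k <= psi . phi  and  phi . psi <= a. *)
Definition adjoint (phi psi : X -> V) : Prop :=
  qle qunit (isup (fun y => tens (phi y) (psi y))) /\
  (forall x y, qle (tens (psi x) (phi y)) (a x y)).

Definition lower_star (x : X) : X -> V := fun y => a x y.
Definition upper_star (x : X) : X -> V := fun y => a y x.

Definition cauchy_complete : Prop :=
  forall phi : X -> V, module_EX phi ->
    (exists psi, module_XE psi /\ adjoint phi psi) ->
    exists x, phi = lower_star x.

Definition Cauchy_val (s : nat -> X) : V :=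
  isup (fun N : nat => qinf (fun w => exists n m, N <= n /\ N <= m /\ w = a (s n) (s m))).

Definition is_Cauchy (s : nat -> X) : Prop := qle qunit (Cauchy_val s).

Definition phi_s (s : nat -> X) : X -> V :=
  fun x => isup (fun N : nat => qinf (fun w => exists n, N <= n /\ w = a (s n) x)).

Definition psi_s (s : nat -> X) : X -> V :=
  fun x => isup (fun N : nat => qinf (fun w => exists n, N <= n /\ w = a x (s n))).

Definition closure (M : X -> Prop) (x : X) : Prop :=
  qle qunit (qsup (fun w => exists y, M y /\ w = tens (a x y) (a y x))).

Definition infinite_nat (M : nat -> Prop) : Prop :=
  forall N, exists n, N <= n /\ M n.

Definition converges_to (s : nat -> X) (x : X) : Prop :=
  forall M : nat -> Prop, infinite_nat M ->
    closure (fun y => exists n, M n /\ y = s n) x.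

End Defs.

Arguments qinf {V}.
Arguments isup {V I}.
Arguments iinf {V I}.
Arguments totally_below {V}.
Arguments is_Vcat {V X}.
Arguments module_EX {V X}.
Arguments module_XE {V X}.
Arguments adjoint {V X}.
Arguments lower_star {V X}.
Arguments upper_star {V X}.
Arguments cauchy_complete {V X}.
Arguments Cauchy_val {V X}.
Arguments is_Cauchy {V X}.
Arguments phi_s {V X}.
Arguments psi_s {V X}.
Arguments closure {V X}.
Arguments converges_to {V X}.

(* Main.v *)
Require Import Defs.
From Stdlib Require Import Arith Lia FunctionalExtensionality ClassicalEpsilon.

Lemma lr {V : quantale} (x : V) : qle x x.
Proof. exact (qle_refl V x). Qed.
Lemma lt {V : quantale} (x y z : V) : qle x y -> qle y z -> qle x z.
Proof. exact (qle_trans V x y z). Qed.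

Lemma tens_unit_r {V : quantale} (x : V) : tens x qunit = x.
Proof. rewrite (tens_comm V). apply (tens_unit V). Qed.

Lemma tens_mono_r {V:quantale} (x y z : V) : qle y z -> qle (tens x y) (tens x z).
Proof.
  intros Hyz.
  assert (E : qsup (fun w => w = y \/ w = z) = z).
  { apply (qle_antisym V).
    - apply (qsup_least V). intros w [->| ->]; [exact Hyz | apply lr].
    - apply (qsup_ub V). now right. }
  apply lt with (tens x (qsup (fun w => w = y \/ w = z))).
  - rewrite (tens_sup V). apply (qsup_ub V). exists y. split; auto.
  - rewrite E. apply lr.
Qed.

Lemma tens_mono {V:quantale} (x x' y y' : V) :
  qle x x' -> qle y y' -> qle (tens x y) (tens x' y').
Proof.
  intros H1 H2. apply lt with (tens x y'). now apply tens_mono_r.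
  rewrite (tens_comm V x), (tens_comm V x'). now apply tens_mono_r.
Qed.

Lemma isup_ub {V:quantale} {I} (f : I -> V) i : qle (f i) (isup f).
Proof. apply (qsup_ub V). now exists i. Qed.

Lemma isup_least {V:quantale} {I} (f : I -> V) c : (forall i, qle (f i) c) -> qle (isup f) c.
Proof. intros H. apply (qsup_least V). intros w [i ->]. apply H. Qed.

Lemma qinf_lb {V:quantale} (S : V -> Prop) x : S x -> qle (qinf S) x.
Proof. intros H. apply (qsup_least V). intros w Hw. exact (Hw x H). Qed.

Lemma qinf_glb {V:quantale} (S : V -> Prop) v : (forall x, S x -> qle v x) -> qle v (qinf S).
Proof. intros H. apply (qsup_ub V). exact H. Qed.

Lemma tens_isup_le {V:quantale} {I} (x : V) (f : I -> V) c :
  (forall i, qle (tens x (f i)) c) -> qle (tens x (isup f)) c.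
Proof.
  intros H. unfold isup. rewrite (tens_sup V). apply (qsup_least V).
  intros w [v [[i ->] ->]]. apply H.
Qed.

Lemma isup_tens_le {V:quantale} {I} (x : V) (f : I -> V) c :
  (forall i, qle (tens (f i) x) c) -> qle (tens (isup f) x) c.
Proof.
  intros H. rewrite (tens_comm V). apply tens_isup_le. intros i.
  rewrite (tens_comm V). apply H.
Qed.

Lemma diag {V:quantale} (c e : nat -> V) :
  (forall n m, n <= m -> qle (c n) (c m)) ->
  (forall n m, n <= m -> qle (e n) (e m)) ->
  qle (tens (isup c) (isup e)) (isup (fun N => tens (c N) (e N))).
Proof.
  intros Hc He. apply isup_tens_le. intros n. apply tens_isup_le. intros m.
  apply lt with (tens (c (max n m)) (e (max n m))).
  - apply tens_mono; [apply Hc | apply He]; lia.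
  - apply (isup_ub (fun N => tens (c N) (e N))).
Qed.

Lemma diag_k {V:quantale} (c : nat -> V) :
  (forall n m, n <= m -> qle (c n) (c m)) -> qle qunit (isup c) ->
  qle qunit (isup (fun N => tens (c N) (c N))).
Proof.
  intros Hc Hk. apply lt with (tens (isup c) (isup c)).
  - rewrite <- (tens_unit V qunit) at 1. now apply tens_mono.
  - now apply diag.
Qed.

Lemma mono_succ {V:quantale} (u : nat -> V) :
  (forall n, qle (u n) (u (S n))) -> forall n m, n <= m -> qle (u n) (u m).
Proof.
  intros H n m Hnm. induction Hnm. apply lr. eapply lt; eauto.
Qed.

Lemma tens_le_l {V:quantale} (k_top : forall v : V, qle v qunit) (x y : V) :
  qle (tens x y) x.
Proof.
  apply lt with (tens x qunit). apply tens_mono_r, k_top. rewrite tens_unit_r. apply lr.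
Qed.

Lemma tens_le_r {V:quantale} (k_top : forall v : V, qle v qunit) (x y : V) :
  qle (tens x y) y.
Proof. rewrite (tens_comm V). now apply tens_le_l. Qed.

Lemma part1 (V : quantale)
  (k_top : forall v : V, qle v qunit) (u : nat -> V)
  (Hu1 : isup u = qunit) (Hu2 : forall n, totally_below (u n) qunit)
  (Hu3 : forall n, qle (u n) (u (S n)))
  (X : Type) (a : X -> X -> V) (HX : is_Vcat a)
  (phi psi : X -> V) :
      module_EX a phi -> module_XE a psi -> adjoint a phi psi ->
      exists y : nat -> X, is_Cauchy a y /\ phi = phi_s a y /\ psi = psi_s a y
        /\ (forall n, qle (u n) (phi (y n))) /\ (forall n, qle (u n) (psi (y n))).
Proof.
  intros [_ Mphi] [Mpsi _] [Ad1 Ad2].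
  assert (Um := mono_succ u Hu3).
  assert (Hy : forall n, exists y, qle (u n) (tens (phi y) (psi y))).
  { intros n. destruct (Hu2 n _ Ad1) as [w [[y ->] Hw]]. now exists y. }
  set (y := fun n => proj1_sig (constructive_indefinite_description _ (Hy n))).
  assert (Hy1 : forall n, qle (u n) (tens (phi (y n)) (psi (y n)))).
  { intros n. unfold y. destruct (constructive_indefinite_description _ (Hy n)). exact q. }
  assert (Hp : forall n, qle (u n) (phi (y n))).
  { intros n. eapply lt. apply Hy1. now apply tens_le_l. }
  assert (Hq : forall n, qle (u n) (psi (y n))).
  { intros n. eapply lt. apply Hy1. now apply tens_le_r. }
  exists y. split; [|split; [|split]]; auto.
  - unfold is_Cauchy, Cauchy_val.
    eapply lt. apply (diag_k u Um). rewrite Hu1. apply lr.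
    apply isup_least. intros N. eapply lt; [|apply isup_ub with (i := N)]. simpl.
    apply qinf_glb. intros w [n [m [Hn [Hm ->]]]].
    eapply lt; [|apply (Ad2 (y n) (y m))]. apply tens_mono.
    eapply lt; [apply Um, Hn|apply Hq]. eapply lt; [apply Um, Hm|apply Hp].
  - apply functional_extensionality. intros x. apply (qle_antisym V).
    + rewrite <- (tens_unit V (phi x)). rewrite <- Hu1 at 1.
      apply isup_tens_le. intros N. unfold phi_s.
      eapply lt; [|apply isup_ub with (i := N)]. simpl.
      apply qinf_glb. intros w [n [Hn ->]].
      eapply lt; [|apply (Ad2 (y n) x)]. apply tens_mono; [|apply lr].
      eapply lt; [apply Um, Hn|apply Hq].
    + unfold phi_s. rewrite <- (tens_unit V (isup _)). rewrite <- Hu1 at 1.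
      apply isup_tens_le. intros n. apply tens_isup_le. intros N.
      eapply lt; [|apply (Mphi (y (max n N)) x)]. apply tens_mono.
      eapply lt; [apply Um with (m := max n N); lia|apply Hp].
      apply qinf_lb. exists (max n N). split; auto. lia.
  - apply functional_extensionality. intros x. apply (qle_antisym V).
    + rewrite <- (tens_unit V (psi x)). rewrite <- Hu1 at 1.
      apply isup_tens_le. intros N. unfold psi_s.
      eapply lt; [|apply isup_ub with (i := N)]. simpl.
      apply qinf_glb. intros w [n [Hn ->]].
      eapply lt; [|apply (Ad2 x (y n))]. rewrite (tens_comm V). apply tens_mono; [apply lr|].
      eapply lt; [apply Um, Hn|apply Hp].
    + unfold psi_s. rewrite <- (tens_unit V (isup _)). rewrite <- Hu1 at 1.
      apply isup_tens_le. intros n. apply tens_isup_le. intros N.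
      eapply lt; [|apply (Mpsi x (y (max n N)))]. rewrite (tens_comm V). apply tens_mono.
      apply qinf_lb. exists (max n N). split; auto. lia.
      eapply lt; [apply Um with (m := max n N); lia|apply Hq].
Qed.

Theorem theorem3p19 (V : quantale)
  (k_top : forall v : V, qle v qunit)
  (Hu : exists u : nat -> V,
      isup u = qunit /\
      (forall n, totally_below (u n) qunit) /\
      (forall n, qle (u n) (u (S n))))
  (X : Type) (a : X -> X -> V) (HX : is_Vcat a) :
  (forall phi psi : X -> V,
      module_EX a phi -> module_XE a psi -> adjoint a phi psi ->
      exists s : nat -> X, is_Cauchy a s /\ phi = phi_s a s /\ psi = psi_s a s) /\
  (cauchy_complete a <->
     (forall s : nat -> X, is_Cauchy a s -> exists x, converges_to a s x)).
Proof.
  destruct Hu as [u [Hu1 [Hu2 Hu3]]].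
  assert (Um := mono_succ u Hu3).
  destruct HX as [Hrefl Htrans].
  split; [|split].
  - intros phi psi H1 H2 H3.
    destruct (part1 V k_top u Hu1 Hu2 Hu3 X a (conj Hrefl Htrans) phi psi H1 H2 H3)
      as [s [? [? [? _]]]]. eauto.
  - intros Hcc s Hs.
    set (d := fun N => qinf (fun w => exists n m, N <= n /\ N <= m /\ w = a (s n) (s m))).
    assert (Dm : forall n m, n <= m -> qle (d n) (d m)).
    { intros n m Hnm. apply qinf_glb. intros w [p [q [Hp [Hq ->]]]].
      apply qinf_lb. exists p, q. repeat split; auto; lia. }
    assert (Dk : qle qunit (isup (fun N => tens (d N) (d N)))).
    { apply diag_k; auto. }
    assert (Dphi : forall N n, N <= n -> qle (d N) (phi_s a s (s n))).
    { intros N n Hn. eapply lt; [|apply isup_ub with (i := N)]. simpl.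
      apply qinf_glb. intros w [m [Hm ->]]. apply qinf_lb. exists m, n. auto. }
    assert (Dpsi : forall N n, N <= n -> qle (d N) (psi_s a s (s n))).
    { intros N n Hn. eapply lt; [|apply isup_ub with (i := N)]. simpl.
      apply qinf_glb. intros w [m [Hm ->]]. apply qinf_lb. exists n, m. auto. }
    assert (A2 : forall x y, qle (tens (psi_s a s x) (phi_s a s y)) (a x y)).
    { intros x y. unfold psi_s, phi_s. apply isup_tens_le. intros N.
      apply tens_isup_le. intros M. eapply lt; [|apply (Htrans x (s (max N M)) y)].
      apply tens_mono; apply qinf_lb; exists (max N M); split; auto; lia. }
    destruct (Hcc (phi_s a s)) as [x Hx].
    + split. intros y. rewrite (tens_unit V). apply lr.
      intros y y'. unfold phi_s at 1. apply isup_tens_le. intros N.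
      eapply lt; [|apply isup_ub with (i := N)]. simpl.
      apply qinf_glb. intros w [n [Hn ->]]. eapply lt; [|apply (Htrans (s n) y y')].
      apply tens_mono; [|apply lr]. apply qinf_lb. eauto.
    + exists (psi_s a s). split; [split|split].
      * intros z z'. unfold psi_s at 1. apply tens_isup_le. intros N.
        eapply lt; [|apply isup_ub with (i := N)]. simpl.
        apply qinf_glb. intros w [n [Hn ->]]. eapply lt; [|apply (Htrans z z' (s n))].
        apply tens_mono; [apply lr|]. apply qinf_lb. eauto.
      * intros z. rewrite tens_unit_r. apply lr.
      * eapply lt; [apply Dk|]. apply isup_least. intros N.
        eapply lt; [|apply (isup_ub (fun y => tens (phi_s a s y) (psi_s a s y)) (s N))].
        apply tens_mono; auto.
      * exact A2.
    + exists x. intros M HM. unfold closure.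
      eapply lt; [apply Dk|]. apply isup_least. intros N.
      destruct (HM N) as [n [Hn Mn]].
      eapply lt; [|apply (qsup_ub V)]; [|exists (s n); split; [exists n; eauto|reflexivity]].
      apply tens_mono.
      * replace (a x (s n)) with (phi_s a s (s n)) by (rewrite Hx; reflexivity). auto.
      * eapply lt; [|apply (A2 (s n) x)]. rewrite Hx. unfold lower_star.
        eapply lt; [|apply tens_mono_r, Hrefl]. rewrite tens_unit_r. auto.
  - intros Hconv phi Mphi [psi [Mpsi Hadj]].
    destruct (part1 V k_top u Hu1 Hu2 Hu3 X a (conj Hrefl Htrans) phi psi Mphi Mpsi Hadj)
      as [s [Hs [_ [_ [Hp Hq]]]]].
    destruct (Hconv s Hs) as [x Hx].
    destruct Mphi as [_ Mphi]. destruct Mpsi as [Mpsi _]. destruct Hadj as [_ Ad2].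
    assert (Key : forall N, qle (u N) (qsup (fun w => exists v,
        (exists z, (exists n, N <= n /\ z = s n) /\ v = tens (a x z) (a z x)) /\ w = tens (u N) v))).
    { intros N. rewrite <- (tens_sup V). rewrite <- (tens_unit_r (u N)) at 1.
      apply tens_mono_r. apply Hx. intros N'. exists (max N N'). split; lia. }
    assert (Kphi : qle qunit (phi x)).
    { rewrite <- Hu1. apply isup_least. intros N. eapply lt; [apply Key|].
      apply (qsup_least V). intros w [v [[z [[n [Hn ->]] ->]] ->]].
      eapply lt; [|apply (Mphi (s n) x)]. apply tens_mono.
      eapply lt; [apply Um, Hn|apply Hp]. now apply tens_le_r. }
    assert (Kpsi : qle qunit (psi x)).
    { rewrite <- Hu1. apply isup_least. intros N. eapply lt; [apply Key|].
      apply (qsup_least V). intros w [v [[z [[n [Hn ->]] ->]] ->]].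
      eapply lt; [|apply (Mpsi x (s n))]. rewrite (tens_comm V (a x (s n)) (psi (s n))).
      apply tens_mono. eapply lt; [apply Um, Hn|apply Hq].
      now apply tens_le_l. }
    exists x. apply functional_extensionality. intros z. unfold lower_star.
    apply (qle_antisym V).
    + eapply lt; [|apply (Ad2 x z)]. rewrite <- (tens_unit V (phi z)) at 1.
      apply tens_mono; auto using lr.
    + eapply lt; [|apply (Mphi x z)]. rewrite <- (tens_unit V (a x z)) at 1.
      apply tens_mono; auto using lr.
Qed.
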